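(* Let $(X,d_X,\mu_X)$ be an mm-space with $X=\operatorname{supp}\mu_X$ and $\operatorname{diam}X<\infty$, and let $x_0\in X$ satisfy $\sup_{x\in X}d_X(x,x_0)=\operatorname{diam}X$. Let $\xi:X\to\mathbb R$, $\xi(x):=d_X(x,x_0)$. Then $\xi_*\mu_X$ is a maximal element of $\mathcal M(X;1)$ with respect to the Lipschitz order. In particular, if $\mathcal M(X;1)$ has a maximum, then this maximum is $\xi_*\mu_X$ (up to mm-isomorphism of $(\mathbb R,|\cdot|,\cdot)$).
   Context: An mm-space is a triple $(X,d_X,\mu_X)$ where $(X,d_X)$ is a complete separable metric space and $\mu_X$ is a Borel probability measure on $X$. The 1-measurement is $\mathcal M(X;1):=\{f_*\mu_X \mid f:X\to\mathbb R \text{ is 1-Lipschitz}\}$. Two mm-spaces $X,Y$ are mm-isomorphic if there is an isometry $f:\operatorname{supp}\mu_X\to\operatorname{supp}\mu_Y$ with $f_*\mu_X=\mu_Y$. For mm-spaces, $Y\prec X$ (Lipschitz order) if there is a 1-Lipschitz map $f:\operatorname{supp}\mu_X\to\operatorname{supp}\mu_Y$ with $f_*\mu_X=\mu_Y$; this is a partial order on mm-isomorphism classes. For Borel probability measures $\mu,\nu$ on $\mathbb R$, $\mu\prec\nu$ means $(\mathbb R,|\cdot|,\mu)\prec(\mathbb R,|\cdot|,\nu)$. An element $\mu\in\mathcal M(X;1)$ is maximal if every $\nu\in\mathcal M(X;1)$ with $\mu\prec\nu$ is mm-isomorphic to $\mu$ (as spaces $(\mathbb R,|\cdot|,\cdot)$);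 it is the maximum if $\nu\prec\mu$ for all $\nu\in\mathcal M(X;1)$. *)

(* Defs.v *)
From HB Require Import structures.
From mathcomp Require Import all_boot all_order all_algebra.
From mathcomp Require Import all_classical all_reals all_analysis.
Set Implicit Arguments. Unset Strict Implicit. Unset Printing Implicit Defensive.
Import Order.TTheory GRing.Theory Num.Theory.
Local Open Scope classical_set_scope.
Local Open Scope ring_scope.

Section mm.
Context {R : realType} {X : Type}.
Variable dist : X -> X -> R.

Definition is_metric : Prop :=
  [/\ forall x y, 0 <= dist x y,
      forall x y, dist x y = 0 <-> x = y,
      forall x y, dist x y = dist y x &
      forall x y z, dist x z <= dist x y + dist y z].

Definition mball (x : X) (r : R) : set X := [set y | dist x y < r].

Definition mopen (A : set X) : Prop :=
  forall x, A x -> exists2 r : R, 0 < r & mball x r `<=` A.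

Definition mcauchy (u : nat -> X) : Prop :=
  forall e : R, 0 < e -> exists N : nat,
    forall m n : nat, (N <= m)%N -> (N <= n)%N -> dist (u m) (u n) < e.

Definition mcomplete : Prop :=
  forall u : nat -> X, mcauchy u -> exists l : X,
    forall e : R, 0 < e -> exists N : nat, forall n : nat, (N <= n)%N -> dist (u n) l < e.

Definition mseparable : Prop :=
  exists u : nat -> X, forall x (e : R), 0 < e -> exists n, dist x (u n) < e.

Definition lip1 (f : X -> R) : Prop := forall x y, `|f x - f y| <= dist x y.

Definition mdiam : R := sup [set r | exists x y, r = dist x y].

End mm.

Definition mm_space {R : realType} {d : measure_display} {X : measurableType d}
  (dist : X -> X -> R) : Prop :=
  [/\ is_metric dist, mcomplete dist, mseparable dist &
      (@measurable d X) = <<s mopen dist >>].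

Definition msupport {R : realType} {d : measure_display} {X : measurableType d}
  (dist : X -> X -> R) (mu : set X -> \bar R) : set X :=
  [set x | forall r : R, 0 < r -> (0 < mu (mball dist x r))%E].

Section realline.
Context {R : realType}.

Definition rsupport (nu : set R -> \bar R) : set R :=
  [set x | forall r : R, 0 < r -> (0 < nu `](x - r)%R, (x + r)%R[%classic)%E].

(* mu ≺ nu : (R,|.|,mu) ≺ (R,|.|,nu): there is a 1-Lipschitz
   f : supp nu -> supp mu with f_* nu = mu *)
Definition lip_order (mu nu : set R -> \bar R) : Prop :=
  exists f : R -> R,
    [/\ forall x y, rsupport nu x -> rsupport nu y -> `|f x - f y| <= `|x - y|,
        f @` rsupport nu `<=` rsupport mu &
        forall A : set R, measurable A -> mu A = nu (rsupport nu `&` f @^-1` A)].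

(* mm-isomorphism of (R,|.|,mu) and (R,|.|,nu): an isometry
   f : supp mu -> supp nu (onto) with f_* mu = nu *)
Definition mmiso (mu nu : set R -> \bar R) : Prop :=
  exists f : R -> R,
    [/\ forall x y, rsupport mu x -> rsupport mu y -> `|f x - f y| = `|x - y|,
        f @` rsupport mu = rsupport nu &
        forall A : set R, measurable A -> nu A = mu (rsupport mu `&` f @^-1` A)].

Definition lip_maximal (S : set (set R -> \bar R)) (m : set R -> \bar R) : Prop :=
  S m /\ forall nu, S nu -> lip_order m nu -> mmiso m nu.

Definition lip_maximum (S : set (set R -> \bar R)) (m : set R -> \bar R) : Prop :=
  S m /\ forall nu, S nu -> lip_order nu m.

End realline.

Definition measurement1 {R : realType} {d : measure_display} {X : measurableType d}
  (dist : X -> X -> R) (mu : set X -> \bar R) : set (set R -> \bar R) :=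
  [set nu | exists f : X -> R, lip1 dist f /\ nu = pushforward mu f].

(* Main.v *)
Require Import Defs.
From HB Require Import structures.
From mathcomp Require Import all_boot all_order all_algebra.
From mathcomp Require Import all_classical all_reals all_analysis.
From mathcomp Require Import ring lra measurable_realfun.
Import Order.TTheory GRing.Theory Num.Theory.
Import numFieldNormedType.Exports.
Local Open Scope classical_set_scope.
Local Open Scope ring_scope.
Set Implicit Arguments. Unset Strict Implicit.

Lemma itvE (R : realType) (x r y : R) :
  (`](x - r), (x + r)[%classic y) <-> `|x - y| < r.
Proof. by rewrite /= in_itv /= ltr_distlC. Qed.

Lemma open_meas (R : realType) (d : measure_display) (X : measurableType d)
  (dist : X -> X -> R) (A : set X) :
  (@measurable d X) = <<s mopen dist >> -> mopen dist A -> measurable A.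
Proof. by move=> ->; exact: sub_sigma_algebra. Qed.

Lemma mball_open (R : realType) (X : Type) (dist : X -> X -> R) x r :
  is_metric dist -> mopen dist (mball dist x r).
Proof.
case=> _ _ _ tri y; rewrite /mball /= => hy.
exists (r - dist x y); first by rewrite subr_gt0.
move=> z /= hz; have := tri x y z; lra.
Qed.

Lemma pre_open (R : realType) (X : Type) (dist : X -> X -> R) (f : X -> R) a b :
  lip1 dist f -> mopen dist (f @^-1` `]a, b[%classic).
Proof.
move=> lf x /=; rewrite in_itv /= => /andP[ha hb].
exists (Num.min (f x - a) (b - f x)).
  by rewrite lt_min !subr_gt0 ha hb.
move=> y; rewrite /mball /= lt_min => /andP[h1 h2].
have := lf x y; rewrite in_itv /= => h.
have : `|f x - f y| < f x - a by apply: le_lt_trans h h1.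
have : `|f x - f y| < b - f x by apply: le_lt_trans h h2.
rewrite !ltr_norml => /andP[? ?] /andP[? ?]; apply/andP; split; lra.
Qed.

Lemma pos_ne (R : realType) (d : measure_display) (X : measurableType d)
  (mu : probability X R) (A : set X) : (0 < mu A)%E -> exists x, A x.
Proof.
move=> h; apply: contrapT => hn.
have A0 : A = set0.
  by apply/seteqP; split => // y Ay; exfalso; apply: hn; exists y.
by move: h; rewrite A0 measure0 ltxx.
Qed.

Lemma pre_meas (R : realType) (d : measure_display) (X : measurableType d)
  (dist : X -> X -> R) (f : X -> R) a b :
  (@measurable d X) = <<s mopen dist >> -> lip1 dist f ->
  measurable (f @^-1` `]a, b[%classic).
Proof. by move=> hm lf; apply: (open_meas hm); exact: pre_open. Qed.

Lemma supp_img (R : realType) (d : measure_display) (X : measurableType d)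
  (dist : X -> X -> R) (mu : probability X R) (f : X -> R) x :
  is_metric dist -> (@measurable d X) = <<s mopen dist >> ->
  (forall x r, 0 < r -> (0 < mu (mball dist x r))%E) ->
  lip1 dist f -> rsupport (pushforward mu f) (f x).
Proof.
move=> hmet hm hs lf r r0; rewrite /pushforward.
apply: (lt_le_trans (hs x r r0)); apply: le_measure; rewrite ?inE.
- have := @open_meas R d X dist _ hm (@mball_open R X dist x r hmet). exact.
- have := @pre_meas R d X dist f (f x - r) (f x + r) hm lf. exact.
move=> y; rewrite /mball /= => h; apply/itvE.
exact: le_lt_trans (lf x y) h.
Qed.

Lemma supp_approx (R : realType) (d : measure_display) (X : measurableType d)
  (mu : probability X R) (f : X -> R) u r :
  rsupport (pushforward mu f) u -> 0 < r -> exists x, `|u - f x| < r.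
Proof.
move=> h r0; have [x /itvE hx] := pos_ne (h r r0); by exists x.
Qed.

Lemma supp_closure (R : realType) (d : measure_display) (X : measurableType d)
  (dist : X -> X -> R) (mu : probability X R) (f : X -> R) z :
  (@measurable d X) = <<s mopen dist >> -> lip1 dist f ->
  (forall r, 0 < r -> exists u, rsupport (pushforward mu f) u /\ `|z - u| < r) ->
  rsupport (pushforward mu f) z.
Proof.
move=> hm lf h r r0.
have r20 : 0 < r / 2 by rewrite divr_gt0.
have [u [hu hzu]] := h _ r20.
apply: (lt_le_trans (hu _ r20)); rewrite /pushforward.
apply: le_measure; rewrite ?inE.
- have := @pre_meas R d X dist f (u - r/2) (u + r/2) hm lf. exact.
- have := @pre_meas R d X dist f (z - r) (z + r) hm lf. exact.
move=> y /= /itvE hy; apply/itvE.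
have := ler_distD u z (f y); lra.
Qed.

Lemma supp_closed (R : realType) (d : measure_display) (X : measurableType d)
  (dist : X -> X -> R) (mu : probability X R) (f : X -> R) :
  (@measurable d X) = <<s mopen dist >> -> lip1 dist f ->
  @closed R (rsupport (pushforward mu f)).
Proof.
move=> hm lf z hz; apply: (supp_closure hm lf) => r r0.
have [u [hu hb]] := hz _ (nbhsx_ballx z r r0).
exists u; split => //; move: hb; rewrite -ball_normE /ball_ /=.
Qed.

Lemma absE (R : realType) (x : R) :
  (0 <= x /\ `|x| = x) \/ (x < 0 /\ `|x| = - x).
Proof.
case: (lerP 0 x) => h; [left; split => //; exact: ger0_norm
                       | right; split => //; exact: ltr0_norm].
Qed.

Lemma geom (R : realType) (s t u v D e : R) : 0 < e ->
  D - 2 * e < `|s - t| -> `|s - t| <= D -> `|s - u| <= D -> `|s - v| <= D ->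
  `|t - u| <= D -> `|t - v| <= D -> `|u - v| <= D ->
  `|s - u| + `|t - v| <= D - `|u - v| + 8 * e \/
  `|s - v| + `|t - u| <= D - `|u - v| + 8 * e.
Proof.
move=> e0.
have [[? ->]|[? ->]] := absE (s - t);
have [[? ->]|[? ->]] := absE (s - u);
have [[? ->]|[? ->]] := absE (s - v);
have [[? ->]|[? ->]] := absE (t - u);
have [[? ->]|[? ->]] := absE (t - v);
have [[? ->]|[? ->]] := absE (u - v); move=> *;
  first [left; lra | right; lra | lra].
Qed.

Lemma xi_lip (R : realType) (X : Type) (dist : X -> X -> R) x0 :
  is_metric dist -> lip1 dist (fun x => dist x x0).
Proof.
case=> _ _ sym tri x y; rewrite ler_norml.
have := tri x y x0; have := tri y x x0; have := sym x y; lra.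
Qed.

Lemma approx_g (R : realType) (d : measure_display) (X : measurableType d)
  (dist : X -> X -> R) (mu : probability X R) (x0 : X) (g : R -> R) (ff : X -> R) :
  is_metric dist -> (@measurable d X) = <<s mopen dist >> ->
  (forall x r, 0 < r -> (0 < mu (mball dist x r))%E) ->
  (forall A : set R, measurable A -> pushforward mu (fun x => dist x x0) A =
      pushforward mu ff (rsupport (pushforward mu ff) `&` g @^-1` A)) ->
  forall x r, 0 < r -> exists s, rsupport (pushforward mu ff) s /\
     `|dist x x0 - g s| < r.
Proof.
move=> hmet hm hs geq x r r0.
have h := @supp_img R d X dist mu (fun x => dist x x0) x hmet hm hs (xi_lip x0 hmet) r r0.
rewrite geq /= in h; last exact: measurable_itv.
have [y [hy1 /itvE hy2]] := pos_ne h.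
by exists (ff y).
Qed.

Lemma g_iso (R : realType) (d : measure_display) (X : measurableType d)
  (dist : X -> X -> R) (mu : probability X R) (x0 : X) (g : R -> R) (f : X -> R) :
  is_metric dist -> (@measurable d X) = <<s mopen dist >> ->
  (forall x r, 0 < r -> (0 < mu (mball dist x r))%E) ->
  (exists M : R, forall x y : X, dist x y <= M) ->
  sup [set r | exists x : X, r = dist x x0] = mdiam dist ->
  lip1 dist f ->
  (forall x y, rsupport (pushforward mu f) x -> rsupport (pushforward mu f) y ->
      `|g x - g y| <= `|x - y|) ->
  (forall A : set R, measurable A -> pushforward mu (fun x => dist x x0) A =
      pushforward mu f (rsupport (pushforward mu f) `&` g @^-1` A)) ->
  forall u v, rsupport (pushforward mu f) u -> rsupport (pushforward mu f) v ->
    `|g u - g v| = `|u - v|.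
Proof.
move=> hmet hm hs [M hM] hsup lf glip geq.
have hmet' := hmet; case: hmet' => _ d0 sym tri.
set D := mdiam dist.
have hD : forall x y, dist x y <= D.
  move=> x y; apply: sup_upper_bound; last by exists x, y.
  split; first by exists (dist x y), x, y.
  by exists M => _ [a [b ->]].
have hxx : dist x0 x0 = 0 by apply/d0.
have hfar : forall e, 0 < e -> exists x, D - e < dist x x0.
  move=> e e0; rewrite /D -hsup.
  have hh : has_sup [set r | exists x : X, r = dist x x0].
    split; first by exists (dist x0 x0), x0.
    by exists M => _ [a ->].
  have [_ [x ->] hx] := sup_adherent e0 hh.
  by exists x.
have hnu : forall u v, rsupport (pushforward mu f) u -> rsupport (pushforward mu f) v ->
    `|u - v| <= D.
  move=> u v hu hv; apply/ler_addgt0Pr => e e0.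
  have e20 : 0 < e / 2 by rewrite divr_gt0.
  have [x hx] := supp_approx hu e20.
  have [y hy] := supp_approx hv e20.
  have := ler_distD (f x) u v; have := ler_distD (f y) (f x) v.
  rewrite distrC in hy; have := lf x y; have := hD x y; lra.
have ap := approx_g hmet hm hs geq.
move=> u v hu hv; apply/le_anti/andP; split; first exact: glip.
apply/ler_addgt0Pr => e e0.
set e' := e / 16; have e'0 : 0 < e' by rewrite divr_gt0.
have [x1 hx1] := hfar e' e'0.
have [s [hs1 hs2]] := ap x1 e' e'0.
have [t [ht1 ht2]] := ap x0 e' e'0.
rewrite hxx sub0r normrN in ht2.
have hst : D - 2 * (3 * e' / 2) < `|s - t|.
  have := glip s t hs1 ht1; have := ler_norm (g s - g t).
  move: hs2 ht2; rewrite !ltr_norml; lra.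
have := geom (s := s) (t := t) (u := u) (v := v) (D := D) (e := 3 * e' / 2).
have -> : (0 < 3 * e' / 2) = true by rewrite divr_gt0 // mulr_gt0.
move=> /(_ isT hst (hnu _ _ hs1 ht1) (hnu _ _ hs1 hu) (hnu _ _ hs1 hv)
   (hnu _ _ ht1 hu) (hnu _ _ ht1 hv) (hnu _ _ hu hv)) hg.
have := glip s u hs1 hu; have := glip s v hs1 hv;
have := glip t u ht1 hu; have := glip t v ht1 hv.
have := ler_distD (g u) (g s) (g t); have := ler_distD (g v) (g u) (g t).
have := ler_distD (g v) (g s) (g t); have := ler_distD (g u) (g v) (g t).
have := ler_distD (g v) (g s) (g u).
have := ler_distD (g u) (g s) (g v).
have := ler_norm (g s - g t).
rewrite (distrC (g v) (g u)) (distrC (g t) (g u)) (distrC (g t) (g v)).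
move: hs2 ht2; rewrite !ltr_norml.
have he : e = 16 * e' by rewrite /e'; field.
case: hg => hg => /andP[? ?] /andP[? ?]; lra.
Qed.

Lemma normr_sq_eq (R : realType) (a b : R) : `|a| = `|b| -> a ^+ 2 = b ^+ 2.
Proof. by move=> h; rewrite -(real_normK (num_real a)) h real_normK // num_real. Qed.

Lemma affine_of_iso (R : realType) (S : set R) (g : R -> R) u0 :
  S u0 -> (forall u v, S u -> S v -> `|g u - g v| = `|u - v|) ->
  exists sg c, (sg = 1 \/ sg = -1) /\ forall u, S u -> g u = sg * u + c.
Proof.
move=> hu0 iso.
case: (pselect (exists u1, S u1 /\ u1 != u0)) => [[u1 [hu1 ne]]|hno]; last first.
  exists 1, (g u0 - u0); split; first by left.
  move=> u hu; case: (eqVneq u u0) => [->|ne]; first by rewrite mul1r; ring.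
  by exfalso; apply: hno; exists u.
have w10 : u1 - u0 != 0 by rewrite subr_eq0.
have h1 := normr_sq_eq (iso _ _ hu1 hu0).
have [sg [hsg e1]] : exists sg, (sg = 1 \/ sg = -1) /\ g u1 - g u0 = sg * (u1 - u0).
  have : (g u1 - g u0 - (u1 - u0)) * (g u1 - g u0 + (u1 - u0)) = 0.
    by rewrite -subr_sqr h1 subrr.
  move/eqP; rewrite mulf_eq0 => /orP[/eqP h|/eqP h].
    exists 1; split; first by left.
    by rewrite mul1r; apply/eqP; rewrite -subr_eq0; apply/eqP.
  exists (-1); split; first by right.
  by rewrite mulN1r; apply/eqP; rewrite -subr_eq0 opprK; apply/eqP.
exists sg, (g u0 - sg * u0); split => // u hu.
have h2 := normr_sq_eq (iso _ _ hu hu0).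
have h3 := normr_sq_eq (iso _ _ hu hu1).
set p := g u - g u0; set w := u - u0; set w1 := u1 - u0.
have e3 : g u - g u1 = p - sg * w1 by rewrite /p -e1; ring.
have e4 : u - u1 = w - w1 by rewrite /w /w1; ring.
rewrite e3 e4 in h3.
have hx : 2 * (w1 * (sg * p - w)) = 0.
  have -> : 2 * (w1 * (sg * p - w)) = ((w - w1)^+2 - w^+2) - ((p - sg*w1)^+2 - p^+2)
     + (sg^+2 - 1) * w1^+2 by ring.
  have -> : sg^+2 = 1 by case: hsg => ->; rewrite ?expr1n ?sqrrN ?expr1n.
  rewrite h2 h3 /w /w1 /p; ring.
move/eqP: hx; rewrite mulf_eq0 pnatr_eq0 /= mulf_eq0 (negbTE w10) /= subr_eq0 => /eqP hp.
have : p = sg * w.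
  rewrite -hp mulrA; case: hsg => ->; rewrite ?mul1r //; ring.
rewrite /p /w => hh; rewrite -[g u](subrK (g u0)) hh; ring.
Qed.

Lemma key (R : realType) (d : measure_display) (X : measurableType d)
  (dist : X -> X -> R) (mu : probability X R) (x0 : X) (f : X -> R) :
  is_metric dist -> (@measurable d X) = <<s mopen dist >> ->
  (forall x r, 0 < r -> (0 < mu (mball dist x r))%E) ->
  (exists M : R, forall x y : X, dist x y <= M) ->
  sup [set r | exists x : X, r = dist x x0] = mdiam dist ->
  lip1 dist f ->
  lip_order (pushforward mu (fun x => dist x x0)) (pushforward mu f) ->
  mmiso (pushforward mu (fun x => dist x x0)) (pushforward mu f) /\
  mmiso (pushforward mu f) (pushforward mu (fun x => dist x x0)).
Proof.
move=> hmet hm hs hM hsup lf [g [glip gimg geq]].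
set nu := pushforward mu f; set rho := pushforward mu (fun x => dist x x0).
have iso := g_iso hmet hm hs hM hsup lf glip geq.
have hu0 : rsupport nu (f x0) := supp_img x0 hmet hm hs lf.
have [sg [c [hsg hg]]] := affine_of_iso hu0 iso.
have sg2 : sg * sg = 1 by case: hsg => ->; rewrite ?mulr1 ?mulrNN ?mulr1.
have himg : rsupport rho `<=` g @` rsupport nu.
  move=> y hy.
  suff hz : rsupport nu (sg * (y - c)).
    by exists (sg * (y - c)) => //; rewrite hg // mulrA sg2 mul1r; ring.
  apply: (supp_closure hm lf) => r r0.
  have h := hy r r0; rewrite /rho geq /= in h; last exact: measurable_itv.
  have [x [hx1 /itvE hx2]] := pos_ne h.
  exists (f x); split => //.
  rewrite hg // in hx2.
  case: hsg => hh; rewrite hh in hx2 *.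
    by have -> : 1 * (y - c) - f x = y - (1 * f x + c) by ring.
  have -> : -1 * (y - c) - f x = - (y - (-1 * f x + c)) by ring.
  by rewrite normrN.
have hnorm : `|sg| = 1 by case: hsg => ->; rewrite ?normr1 ?normrN1.
have hFg : forall u, rsupport nu u -> sg * (g u - c) = u.
  by move=> u hu; rewrite hg // addrK mulrA sg2 mul1r.
have mF : measurable_fun setT (fun y : R => sg * (y - c)).
  apply: measurable_funM; first exact: measurable_cst.
  apply: measurable_funB; [exact: measurable_id | exact: measurable_cst].
split; last first.
  exists g; split => //.
  by apply/seteqP; split; [exact: gimg | exact: himg].
exists (fun y => sg * (y - c)); split.
- move=> y y' _ _; rewrite -mulrBr normrM hnorm mul1r.
  by have -> : y - c - (y' - c) = y - y' by ring.
- apply/seteqP; split.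
    move=> _ [y hy <-]; have [u hu <-] := himg y hy; by rewrite hFg.
  move=> u hu; exists (g u); last exact: hFg.
  by apply: gimg; exists u.
- move=> A mA; rewrite /rho geq; last first.
    apply: measurableI.
      have := closed_measurable (@supp_closed _ _ _ dist mu _ hm (xi_lip x0 hmet)). exact.
    by have := mF measurableT A mA; rewrite setTI.
  rewrite /nu /pushforward; congr (mu _); apply/seteqP; split => x /=.
    move=> hA; have h1 : rsupport nu (f x) := supp_img x hmet hm hs lf.
    split => //; split; last by rewrite hFg.
    by apply: gimg; exists (f x).
  by case=> h1 [_]; rewrite hFg.
Qed.

Unset Implicit Arguments.

Theorem corollary1p3 (R : realType) (d : measure_display) (X : measurableType d)
  (dist : X -> X -> R) (mu : probability X R) (x0 : X) :
  mm_space dist ->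
  msupport dist mu = [set: X] ->
  (exists M : R, forall x y : X, dist x y <= M) ->
  sup [set r | exists x : X, r = dist x x0] = mdiam dist ->
  lip_maximal (measurement1 dist mu) (pushforward mu (fun x => dist x x0)) /\
  (forall m, lip_maximum (measurement1 dist mu) m ->
     mmiso m (pushforward mu (fun x => dist x x0))).
Proof.
move=> [hmet _ _ hm] hS hM hsup.
have hs : forall x r, 0 < r -> (0 < mu (mball dist x r))%E.
  move=> x r r0; have hx : msupport dist mu x by rewrite hS.
  exact: hx.
have Srho : measurement1 dist mu (pushforward mu (fun x => dist x x0)).
  by exists (fun x => dist x x0); split => //; exact: xi_lip.
split.
  split => // nu [f [lf ->]] hlo.
  exact: (key hmet hm hs hM hsup lf hlo).1.
move=> m [[f [lf ->]] hmax].
exact: (key hmet hm hs hM hsup lf (hmax _ Srho)).2.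
Qed.
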